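(* Let $H$ be an $r$-uniform hypergraph and $k\geq 1$ an integer. For any vertex $v\in S_i$, the depth of $v$ is at least $i$.
   Context: The parallel $k$-stripping process applied to $H$ repeatedly removes, in each round, all vertices of degree less than $k$ simultaneously together with all hyperedges containing them, until none remain; $S_i$ is the set of vertices removed in round $i$. A $k$-stripping sequence is a sequence of vertices that can be deleted one at a time (each with its incident hyperedges) such that each has degree less than $k$ at the time of its deletion. For a vertex $v$ not in the $k$-core (the maximum subhypergraph of minimum degree at least $k$), its depth is the length of a shortest $k$-stripping sequence ending with $v$. *)

(* Defs.v *)
From mathcomp Require Import all_boot.
Set Implicit Arguments. Unset Strict Implicit. Unset Printing Implicit Defensive.

Section Hyper.
Variables (V : finType) (H : {set {set V}}) (k : nat).

Definition uniform (r : nat) : Prop := forall e, e \in H -> #|e| = r.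

(* Degree of v in the hypergraph obtained from H by deleting the vertex set D
   together with all hyperedges meeting D. *)
Definition deg_del (D : {set V}) (v : V) : nat :=
  #|[set e in H | (v \in e) && [disjoint e & D]]|.

Fixpoint removed (n : nat) : {set V} :=
  match n with
  | 0 => set0
  | n.+1 => let R := removed n in
            R :|: [set v | (v \notin R) && (deg_del R v < k)]
  end.

(* S_i: vertices removed in round i (i >= 1); S_0 is empty. *)
Definition S (i : nat) : {set V} := removed i :\: removed i.-1.

Fixpoint strip_from (D : {set V}) (s : seq V) : bool :=
  match s with
  | [::] => true
  | x :: s' => [&& x \notin D, deg_del D x < k & strip_from (x |: D) s']
  end.

Definition strip_seq (s : seq V) : bool := strip_from set0 s.

Definition strip_seq_ending (v : V) (s : seq V) : bool :=
  [&& strip_seq s, 0 < size s & last v s == v].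

(* Depth of v: length of a shortest k-stripping sequence ending with v.
   Sequences have distinct entries, so lengths are at most #|V|; if no such
   sequence exists (v in the k-core) the value defaults to #|V|.+1. *)
Definition depth (v : V) : nat :=
  find (fun n => [exists t : n.-tuple V, strip_seq_ending v t])
       (iota 0 #|V|.+1).

End Hyper.

(* Main.v *)
Require Import Defs.
From mathcomp Require Import all_boot.

Section L.
Variables (V : finType) (H : {set {set V}}) (k : nat).

Lemma removed_sub n : removed H k n \subset removed H k n.+1.
Proof. by rewrite /= subsetUl. Qed.

Lemma removed_mono m d : removed H k m \subset removed H k (m + d).
Proof.
elim: d => [|d IH]; first by rewrite addn0.
by apply: subset_trans IH _; rewrite addnS removed_sub.
Qed.

Lemma removed_le m n : m <= n -> removed H k m \subset removed H k n.
Proof. by move=> /subnKC <-; apply: removed_mono. Qed.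

Lemma deg_anti (D1 D2 : {set V}) v : D1 \subset D2 -> deg_del H D2 v <= deg_del H D1 v.
Proof.
move=> sD; apply: subset_leq_card; apply/subsetP=> e.
rewrite !inE => /and3P[-> -> /= dj]; exact: disjointWr sD dj.
Qed.


Lemma strip_removed s D m x0 : strip_from H k D s -> D \subset removed H k m ->
  forall j, j < size s -> nth x0 s j \in removed H k (m + j.+1).
Proof.
elim: s D m => [|x s IH] D m //= /and3P[xD dx st] sD [|j] /=.
- move=> _; rewrite addn1 /= inE; case: (boolP (x \in removed H k m)) => //= xR.
  rewrite inE xR /=; apply: leq_ltn_trans dx; exact: deg_anti.
- rewrite ltnS => js; rewrite -addSnnS; apply: IH st _ _ js.
  rewrite subUset sub1set; apply/andP; split.
    rewrite /= inE; case: (boolP (x \in removed H k m)) => //= xR.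
    rewrite inE xR /=; apply: leq_ltn_trans dx; exact: deg_anti.
  exact: subset_trans sD (removed_sub m).
Qed.

Lemma removed_stable j d : removed H k j.+1 = removed H k j ->
  removed H k (j + d) = removed H k j.
Proof.
move=> E; elim: d => [|d IH]; first by rewrite addn0.
have step a b : removed H k a = removed H k b -> removed H k a.+1 = removed H k b.+1.
  by move=> /= ->.
by rewrite addnS (step _ _ IH) E.
Qed.

End L.

Theorem lemma22 (V : finType) (H : {set {set V}}) (r k : nat)
  (Hunif : uniform H r) (Hk : 1 <= k) (i : nat) (v : V) :
  v \in S H k i -> i <= depth H k v.
Proof.
rewrite /S inE => /andP[vn vi].
have i0 : 0 < i by case: i vn vi => //= ; rewrite inE.
have card_ge : forall j, j <= i -> j <= #|removed H k j|.
  elim=> [//|j IH] ji.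
  have pr : removed H k j \proper removed H k j.+1.
    rewrite properEneq removed_sub andbT; apply/negP => /eqP E.
    have E1 := @removed_stable _ H k j (i.-1 - j) (esym E).
    have E2 := @removed_stable _ H k j (i - j) (esym E).
    rewrite subnKC in E1; last by rewrite -ltnS prednK.
    rewrite subnKC in E2; last exact: ltnW.
    by move: vn; rewrite E1 -E2 vi.
  by apply: leq_ltn_trans (IH (ltnW ji)) (proper_card pr).
have iV : i <= #|V| by apply: leq_trans (card_ge i (leqnn i)) (max_card _).
rewrite /depth.
set P := (fun n => _).
set l := iota 0 _.
case: (leqP i (find P l)) => // lt.
have hl : find P l < size l.
  by rewrite size_iota; apply: leq_trans lt _; apply: leqW.
have := nth_find 0 (a := P) (s := l); rewrite has_find hl => /(_ isT).
rewrite nth_iota; last by rewrite -(size_iota 0 #|V|.+1).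
rewrite add0n /P.
move=> /existsP[t /and3P[st sz /eqP lv]].
have := @strip_removed _ H k t set0 0 v st (sub0set _) (size t).-1.
rewrite prednK // leqnn add0n nth_last lv => /(_ isT) vt.
rewrite size_tuple in vt.
have : removed H k (find P l) \subset removed H k i.-1.
  by apply: removed_le; rewrite -ltnS prednK.
by move/subsetP/(_ v vt); rewrite (negbTE vn).
Qed.
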